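(* Let $k\ge 1$ and $1\le k^*\le k$ be integers, and run the Reduce-By-Median-Counter algorithm (defined in the context) with parameters $k,k^*$ on a weighted stream. Then for every integer $0\le j<k^*$ and every item $i\in[m]$, the estimate $\hat f_i$ returned by Estimate$(i)$ after processing the stream satisfies $$0\le f_i-\hat f_i\le \frac{N^{\mathrm{res}(j)}}{k^*-j}.$$
   Context: A weighted stream over the universe $[m]=\{1,\dots,m\}$ is a sequence of updates $(i_1,\Delta_1),\dots,(i_n,\Delta_n)$ with $i_t\in[m]$ and real weights $\Delta_t>0$. The frequency of $i$ is $f_i=\sum_{t: i_t=i}\Delta_t$, and $N=\sum_t\Delta_t$. $N^{\mathrm{res}(j)}$ denotes the sum of the frequencies of all items except the $j$ items of largest frequency (ties broken arbitrarily). The Reduce-By-Median-Counter algorithm with integer parameters $k\ge 1$ and $1\le k^*\le k$ maintains a set $T\subseteq[m]$ of at most $k$ items, each $j\in T$ carrying a nonnegative real counter $c(j)$; initially $T=\emptyset$. Update$(i,\Delta)$: if $i\in T$, set $c(i)\gets c(i)+\Delta$; else if $|T|<k$, add $i$ to $T$ with $c(i)=\Delta$; else call DecrementCounters(), and afterwards, if $\Delta\ge c_{k^*}$, add $i$ to $T$ with $c(i)=\Delta-c_{k^*}$. DecrementCounters(): let $c_{k^*}$ be the $k^*$-th largest value, counting multiplicity, of the multiset $\{c(j): j\in T\}$; for every $j\in T$ set $c(j)\gets c(j)-c_{k^*}$, and remove $j$ from $T$ if now $c(j)\le 0$. Estimate$(i)$ returns $c(i)$ if $i\in T$ and $0$ otherwise.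 *)

(* Defs.v *)
(* Reduce-By-Median-Counter over the universe 'I_m
   (items 0..m-1 stand for 1..m), weights in a real field R. *)
From HB Require Import structures.
From mathcomp Require Import all_boot all_order all_algebra.
Set Implicit Arguments. Unset Strict Implicit. Unset Printing Implicit Defensive.
Import Order.TTheory GRing.Theory Num.Theory.
Local Open Scope ring_scope.

Section RBMC.
Variables (R : realFieldType) (m : nat).

Definition stream := seq ('I_m * R).

(* The algorithm state: the set T with counters, as a list of (item, counter)
   pairs (items pairwise distinct by construction). *)
Definition state := seq ('I_m * R).

Definition inT (T : state) (i : 'I_m) : bool := i \in map fst T.

Definition kth_largest (k' : nat) (s : seq R) : R :=
  nth 0 (sort (fun x y : R => y <= x) s) k'.-1.

Definition decrement_by (cs : R) (T : state) : state :=
  filter (fun p => 0 < p.2) (map (fun p => (p.1, p.2 - cs)) T).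

Definition update (k ks : nat) (T : state) (u : 'I_m * R) : state :=
  let: (i, d) := u in
  if inT T i then map (fun p => if p.1 == i then (p.1, p.2 + d) else p) T
  else if (size T < k)%N then rcons T (i, d)
  else let cs := kth_largest ks (map snd T) in
       let T' := decrement_by cs T in
       if cs <= d then rcons T' (i, d - cs) else T'.

Definition run (k ks : nat) (s : stream) : state := foldl (update k ks) [::] s.

Definition estimate (T : state) (i : 'I_m) : R :=
  if inT T i then nth 0 (map snd T) (index i (map fst T)) else 0.

Definition freq (s : stream) (i : 'I_m) : R := \sum_(u <- s | u.1 == i) u.2.

Definition total (s : stream) : R := \sum_(u <- s) u.2.

Definition Nres (s : stream) (j : nat) : R :=
  \sum_(x <- drop j (sort (fun x y : R => y <= x) [seq freq s i | i <- enum 'I_m])) x.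

End RBMC.

(* Main.v *)
Require Import Defs.
From HB Require Import structures.
From mathcomp Require Import all_boot all_order all_algebra.
From mathcomp Require Import zify ring lra.
Set Implicit Arguments. Unset Strict Implicit. Unset Printing Implicit Defensive.
Import Order.TTheory GRing.Theory Num.Theory.
Local Open Scope ring_scope.

Section Gen.
Variable R : realFieldType.

Lemma sum_const_seq (I : Type) (r : seq I) (P : pred I) (c : R) :
  \sum_(p <- r | P p) c = c *+ count P r.
Proof.
elim: r => [|x r IH]; first by rewrite big_nil.
by rewrite big_cons /= IH; case: (P x); rewrite ?mulrS ?add0n.
Qed.

Lemma sum_le_count (I : Type) (r : seq I) (P : pred I) (F : I -> R) (c : R) :
  (forall x, P x -> F x <= c) -> \sum_(p <- r | P p) F p <= c *+ count P r.
Proof.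
move=> h; rewrite -sum_const_seq; exact: ler_sum.
Qed.

Lemma count_split (I : Type) (r : seq I) (P Q : pred I) :
  (count Q r <= count (fun x => P x && Q x) r + count (fun x => ~~ P x) r)%N.
Proof.
elim: r => //= x r IH; case: (P x); case: (Q x) => /=; lia.
Qed.

Definition ge_rel := fun x y : R => y <= x.

Lemma kth_mem ks (l : seq R) : (1 <= ks)%N -> (ks <= size l)%N ->
  kth_largest ks l \in l.
Proof.
move=> h1 h2; rewrite /kth_largest -(mem_sort ge_rel) mem_nth // size_sort.
by case: ks h1 h2.
Qed.

Lemma kth_count ks (l : seq R) : (1 <= ks)%N -> (ks <= size l)%N ->
  (ks <= count (fun v : R => (kth_largest ks l <= v)%R) l)%N.
Proof.
move=> h1 h2.
have tot : total ge_rel by move=> x y; rewrite /ge_rel le_total.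
have srt := sort_sorted tot l.
set S := sort ge_rel l in srt *.
have -> : count (fun v : R => (kth_largest ks l <= v)%R) l =
          count (fun v : R => (kth_largest ks l <= v)%R) S.
  by apply/permP; rewrite perm_sym perm_sort.
rewrite -(cat_take_drop ks S) count_cat.
have szS : size S = size l by rewrite size_sort.
have : all (fun v : R => (kth_largest ks l <= v)%R) (take ks S).
  apply/(all_nthP 0) => i; rewrite size_take szS.
  have -> : (if (ks < size l)%N then ks else size l) = ks by case: ifP => //; lia.
  move=> hi; rewrite nth_take //.
  have := @sorted_leq_nth _ ge_rel _ _ 0 S srt i ks.-1.
  rewrite /kth_largest -/S /ge_rel !inE szS; apply.
  - by move=> x y z /= h h'; apply: le_trans h' h.
  - by move=> x /=.
  - lia.
  - by case: ks h1 h2 hi.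
  - by case: ks h1 h2 hi.
rewrite all_count => /eqP ->; rewrite size_take szS.
case: ifP => _; lia.
Qed.

End Gen.

Section Aux.
Variables (R : realFieldType) (m : nat).
Implicit Types (T : state R m).

Lemma sum_notin T a (F : 'I_m * R -> R) : a \notin map fst T ->
  \sum_(p <- T | p.1 == a) F p = 0.
Proof.
move=> ha; rewrite big_seq_cond big1 // => p /andP[pT /eqP pa].
by move: ha; rewrite -pa (map_f fst pT).
Qed.

Lemma est_sum T a : uniq (map fst T) ->
  estimate T a = \sum_(p <- T | p.1 == a) p.2.
Proof.
elim: T => [|[b v] T IH] /=; first by rewrite /estimate /inT /= big_nil.
move=> /andP[hb hu]; rewrite big_cons /=.
case: (eqVneq b a) => [<-|nba].
  rewrite sum_notin // addr0 /estimate /inT /= mem_head /= eqxx //.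
rewrite -IH // /estimate /inT /= in_cons eq_sym (negbTE nba) /=.
by case: ifP.
Qed.

Lemma count_key T a : uniq (map fst T) ->
  count (fun p : 'I_m * R => p.1 == a) T = (a \in map fst T).
Proof.
move=> hu; rewrite -(count_uniq_mem a hu) count_map.
by apply: eq_count => p /=; rewrite eq_sym.
Qed.

Lemma est_inc T i d a : uniq (map fst T) -> inT T i ->
  let T' := map (fun p : 'I_m * R => if p.1 == i then (p.1, p.2 + d) else p) T in
  uniq (map fst T') /\ estimate T' a = estimate T a + (if i == a then d else 0).
Proof.
move=> hu hi T'.
have kT : map fst T' = map fst T.
  by rewrite /T' -map_comp; apply: eq_map => p /=; case: ifP.
split; first by rewrite kT.
rewrite est_sum ?kT // est_sum // /T' big_map.
rewrite (eq_bigl (fun p : 'I_m * R => p.1 == a)); last by move=> p /=; case: ifP.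
rewrite (eq_bigr (fun p : 'I_m * R => p.2 + (if p.1 == i then d else 0))); last first.
  by move=> p _ /=; case: ifP; rewrite ?addr0.
rewrite big_split /=; congr (_ + _).
case: (eqVneq i a) => [<-|nia].
  rewrite (eq_bigr (fun _ => d)); last by move=> p ->.
  by rewrite sum_const_seq count_key // -/(inT T i) hi.
rewrite big1 // => p /eqP pa; rewrite pa eq_sym (negbTE nia) //.
Qed.

Lemma est_rcons T i d a : uniq (map fst T) -> ~~ inT T i ->
  uniq (map fst (rcons T (i, d))) /\
  estimate (rcons T (i, d)) a = estimate T a + (if i == a then d else 0).
Proof.
move=> hu hi.
have hu' : uniq (map fst (rcons T (i, d))) by rewrite map_rcons rcons_uniq hi hu.
split => //; rewrite !est_sum // big_rcons /=.
by case: ifP; rewrite ?addr0.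
Qed.


Lemma est_dec T cs a : uniq (map fst T) ->
  let T1 := decrement_by cs T in
  [/\ uniq (map fst T1), {subset map fst T1 <= map fst T},
      (forall p, p \in T1 -> 0 < p.2) &
      estimate T1 a = \sum_(p <- T | p.1 == a) (if 0 < p.2 - cs then p.2 - cs else 0)].
Proof.
move=> hu T1.
have sub : subseq (map fst T1) (map fst T).
  rewrite /T1 /decrement_by filter_map -map_comp.
  have -> : map (fst \o (fun p : 'I_m * R => (p.1, p.2 - cs))) =1 map fst by [].
  exact/map_subseq/filter_subseq.
have hu1 : uniq (map fst T1) by apply: subseq_uniq sub hu.
split => //.
- by move=> x; apply: mem_subseq.
- by move=> p; rewrite /T1 /decrement_by mem_filter => /andP[].
rewrite est_sum // /T1 /decrement_by big_filter_cond big_map /=.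
rewrite [RHS]big_mkcond [LHS]big_mkcond; apply: eq_bigr => p _ /=.
by case: (0 < p.2 - cs); case: (p.1 == a).
Qed.

Lemma sum_exch T (A : {pred 'I_m}) (F : 'I_m * R -> R) :
  \sum_(a in A) \sum_(p <- T | p.1 == a) F p = \sum_(p <- T | p.1 \in A) F p.
Proof.
rewrite (eq_bigr (fun a => \sum_(p <- T) (if p.1 == a then F p else 0))); last first.
  by move=> a _; rewrite big_mkcond.
rewrite exchange_big [RHS]big_mkcond; apply: eq_bigr => p _.
case h: (p.1 \in A).
  rewrite (bigD1 p.1) //= eqxx big1 ?addr0 // => a /andP[_ ne].
  by rewrite eq_sym (negbTE ne).
rewrite big1 // => a aA; case: eqP => // e; by rewrite e aA in h.
Qed.

Lemma count_inH T (H : {set 'I_m}) : uniq (map fst T) ->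
  (count (fun p : 'I_m * R => p.1 \in H) T <= #|H|)%N.
Proof.
move=> hu.
have -> : count (fun p : 'I_m * R => p.1 \in H) T = count (mem H) (map fst T).
  by rewrite count_map.
rewrite -size_filter cardE; apply: uniq_leq_size; first exact: filter_uniq.
by move=> x; rewrite mem_filter mem_enum => /andP[].
Qed.


Definition delta T T' (i : 'I_m) (d : R) a :=
  estimate T a + (if i == a then d else 0) - estimate T' a.

Lemma delta0 T T' i d (H : {set 'I_m}) (n : nat) :
  (forall a, estimate T' a = estimate T a + (if i == a then d else 0)) ->
  exists c, [/\ 0 <= c, forall a, 0 <= delta T T' i d a <= c &
                n%:R * c <= \sum_(a in ~: H) delta T T' i d a].
Proof.
move=> he; exists 0; have dz a : delta T T' i d a = 0 by rewrite /delta he subrr.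
split => //; first by move=> a; rewrite dz lexx.
by rewrite mulr0 big1.
Qed.

Lemma step k ks T i d (H : {set 'I_m}) :
  (1 <= ks)%N -> (ks <= k)%N -> uniq (map fst T) ->
  (forall p, p \in T -> 0 <= p.2) -> 0 < d ->
  [/\ uniq (map fst (update k ks T (i, d))),
      (forall p, p \in update k ks T (i, d) -> 0 <= p.2) &
      exists c, [/\ 0 <= c, forall a, 0 <= delta T (update k ks T (i, d)) i d a <= c &
        (ks - #|H|)%:R * c <= \sum_(a in ~: H) delta T (update k ks T (i, d)) i d a]].
Proof.
move=> hks hk hu hn hd; rewrite /update.
case hi: (inT T i).
  have [hu' _] := est_inc d i hu hi.
  split => //.
    move=> p /mapP[q qT ->]; case: ifP => _ /=; last exact: hn.
    by apply: addr_ge0; [exact: hn | exact: ltW].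
  by apply: delta0 => a; have [_ ->] := est_inc d a hu hi.
case hs: (size T < k)%N.
  have [hu' _] := est_rcons d i hu (negbT hi).
  split => //.
    move=> p; rewrite mem_rcons in_cons => /orP[/eqP -> /=|]; [exact: ltW | exact: hn].
  by apply: delta0 => a; have [_ ->] := est_rcons d a hu (negbT hi).
set cs := kth_largest ks (map snd T).
have szk : (ks <= size (map snd T))%N by rewrite size_map; move/negbT: hs; lia.
have csT : cs \in map snd T by apply: kth_mem.
have cs0 : 0 <= cs by move/mapP: csT => [q qT ->]; exact: hn.
have cnt := kth_count hks szk; rewrite -/cs count_map in cnt.
case: (est_dec cs i hu) => hu1 sub1 pos1 _.
have e1 a : estimate (decrement_by cs T) a =
   \sum_(p <- T | p.1 == a) (if 0 < p.2 - cs then p.2 - cs else 0).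
  by case: (est_dec cs a hu).
set T1 := decrement_by cs T in hu1 sub1 pos1 e1 *.
have niT1 : ~~ inT T1 i by apply/negP => /sub1; rewrite -/(inT T i) hi.
set psi := if cs <= d then d - cs else 0.
have eT' a : estimate (if cs <= d then rcons T1 (i, d - cs) else T1) a =
   estimate T1 a + (if i == a then psi else 0).
  rewrite /psi; case: ifP => _; first by have [_ ->] := est_rcons (d - cs) a hu1 niT1.
  by case: (i == a); rewrite addr0.
split.
- by case: ifP => _ //; have [-> _] := est_rcons (d - cs) i hu1 niT1.
- case: ifP => hcd p.
    rewrite mem_rcons in_cons => /orP[/eqP -> /=|/pos1/ltW //].
    by rewrite subr_ge0.
  by move/pos1/ltW.
exists cs.
set phi := fun v : R => if 0 < v - cs then v - cs else 0.
have dl a : delta T (if cs <= d then rcons T1 (i, d - cs) else T1) i d a =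
   \sum_(p <- T | p.1 == a) (p.2 - phi p.2) + (if i == a then d - psi else 0).
  rewrite /delta eT' e1 est_sum // sumrB.
  by case: (i == a); rewrite /phi; lra.
have chi_le v : v - phi v <= cs.
  rewrite /phi; case: ifP => h; first lra.
  by move/negbT: h; rewrite -leNgt; lra.
have chi_ge v : 0 <= v -> 0 <= v - phi v.
  rewrite /phi; case: ifP => h; first lra.
  lra.
have psi_b : 0 <= d - psi <= cs.
  rewrite /psi; case: ifP => h; apply/andP; split; try lra.
split => //.
- move=> a; rewrite dl; case: (eqVneq i a) => [<-|nia].
    by rewrite sum_notin ?add0r // -/(inT T i) hi.
  rewrite addr0; apply/andP; split.
    rewrite big_seq_cond sumr_ge0 // => p /andP[pT _]; apply: chi_ge; exact: hn.
  apply: le_trans (sum_le_count (P := fun p : 'I_m * R => p.1 == a) T (fun p _ => chi_le p.2)) _.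
  by rewrite count_key //; case: (a \in _); rewrite ?mulr0n ?mulr1n.
apply: (@le_trans _ _ (\sum_(a in ~:H) \sum_(p <- T | p.1 == a) (p.2 - phi p.2))); last first.
  apply: ler_sum => a _; rewrite dl lerDl; case: ifP => _ //; by case/andP: psi_b.
rewrite sum_exch (bigID (fun p : 'I_m * R => cs <= p.2)) /=.
apply: (@le_trans _ _ (\sum_(p <- T | (p.1 \in ~: H) && (cs <= p.2)) (p.2 - phi p.2))); last first.
  rewrite lerDl big_seq_cond sumr_ge0 // => p /andP[pT _]; apply: chi_ge; exact: hn.
rewrite (eq_bigr (fun _ => cs)); last first.
  move=> p /andP[_ h]; rewrite /phi; case: ifP => h'; first lra.
  by move/negbT: h'; rewrite -leNgt; lra.
rewrite sum_const_seq -[X in _ <= X]mulr_natr [X in X <= _]mulrC; apply: ler_wpM2l => //; rewrite ler_nat.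
have c1 := count_split T (fun p : 'I_m * R => p.1 \in ~: H) (fun p : 'I_m * R => cs <= p.2).
have c2 := count_inH H hu.
have c3 : count (fun p : 'I_m * R => p.1 \notin ~: H) T = count (fun p : 'I_m * R => p.1 \in H) T.
  by apply: eq_count => p; rewrite inE negbK.
have cnt' : (ks <= count (fun p : 'I_m * R => (cs <= p.2)%R) T)%N by [].
rewrite leq_subLR; apply: leq_trans cnt' _; apply: leq_trans c1 _; rewrite c3 addnC leq_add2r; exact: c2.
Qed.

End Aux.
Section Aux2.
Variables (R : realFieldType) (m : nat).

Lemma nres_set (s : stream R m) j : exists H : {set 'I_m},
  (#|H| <= j)%N /\ Nres s j = \sum_(a in ~: H) freq s a.
Proof.
set f := freq s.
set e := sort (relpre f (fun x y : R => y <= x)) (enum 'I_m).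
set H := [set a in take j e].
exists H; split.
  rewrite cardsE (leq_trans (card_size _)) //= size_take; case: ifP => // /negbT.
  by rewrite -leqNgt.
have pe : perm_eq e (enum 'I_m) by rewrite perm_sort.
have ue : uniq e by rewrite sort_uniq enum_uniq.
rewrite /Nres -/f sort_map /= -/e -map_drop big_map.
rewrite [RHS]big_mkcond -big_enum /= -(perm_big _ pe) /= -big_mkcond /=.
have ee := cat_take_drop j e.
rewrite -[in RHS]ee big_cat /=.
rewrite [X in _ = X + _]big_seq_cond [X in _ = X + _]big1 ?add0r => [|a /andP[ha]]; last first.
  by rewrite !inE ha.
rewrite [RHS]big_seq_cond [LHS]big_seq_cond; apply: eq_bigl => a.
case ha: (a \in drop j e) => //=; rewrite !inE.
move: ue; rewrite -ee cat_uniq => /and3P[_ /hasPn H' _].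
by rewrite ee (H' a ha).
Qed.

End Aux2.

Section Main.
Variables (R : realFieldType) (m k ks : nat).

Lemma est_ge0 (T : state R m) a : uniq (map fst T) ->
  (forall p, p \in T -> 0 <= p.2) -> 0 <= estimate T a.
Proof.
move=> hu hn; rewrite est_sum // big_seq_cond sumr_ge0 // => p /andP[pT _].
exact: hn.
Qed.

Lemma freq_rcons (p : stream R m) i d a :
  freq (rcons p (i, d)) a = freq p a + (if i == a then d else 0).
Proof. by rewrite /freq big_rcons. Qed.

Lemma inv (H : {set 'I_m}) (hks : (1 <= ks)%N) (hk : (ks <= k)%N) (p : stream R m) :
  (forall u, u \in p -> 0 < u.2) ->
  [/\ uniq (map fst (run k ks p)), (forall q, q \in run k ks p -> 0 <= q.2),
      (forall a, 0 <= freq p a - estimate (run k ks p) a) &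
      (forall a, (ks - #|H|)%:R * (freq p a - estimate (run k ks p) a) <=
          \sum_(b in ~: H) (freq p b - estimate (run k ks p) b))].
Proof.
elim/last_ind: p => [|p [i d] IH] hp.
  have e0 a : freq [::] a - estimate (run k ks [::]) a = 0 :> R.
    by rewrite /freq big_nil /estimate /inT /= subrr.
  split => //; first by move=> a; rewrite e0.
  by move=> a; rewrite e0 mulr0 big1.
have hp' : forall u, u \in p -> 0 < u.2.
  by move=> u hu; apply: hp; rewrite mem_rcons in_cons hu orbT.
have hd : 0 < d by have := hp (i, d); rewrite mem_rcons mem_head; apply.
have [hu hn hg hK] := IH hp'.
rewrite /run foldl_rcons -/(run k ks p).
set T := run k ks p in hu hn hg hK *.
have [hu' hn' [c [c0 hc hs]]] := step i H hks hk hu hn hd.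
set T' := update k ks T (i, d) in hu' hn' hc hs *.
have eg a : freq (rcons p (i, d)) a - estimate T' a =
    (freq p a - estimate T a) + delta T T' i d a.
  by rewrite freq_rcons /delta; ring.
split => //.
- move=> a; rewrite eg; apply: addr_ge0 => //; by case/andP: (hc a).
- move=> a; rewrite eg.
  rewrite (eq_bigr (fun b => (freq p b - estimate T b) + delta T T' i d b)); last first.
    by move=> b _; rewrite eg.
  rewrite big_split /= mulrDr; apply: lerD; first exact: hK.
  apply: le_trans hs; apply: ler_wpM2l => //; by case/andP: (hc a).
Qed.

End Main.

Unset Implicit Arguments.
Theorem theorem5 (R : realFieldType) (m k ks : nat) (s : stream R m)
  (hk : (1 <= k)%N) (hks1 : (1 <= ks)%N) (hks2 : (ks <= k)%N)
  (hpos : forall u, u \in s -> 0 < u.2)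
  (j : nat) (hj : (j < ks)%N) (i : 'I_m) :
  0 <= freq s i - estimate (run k ks s) i /\
  freq s i - estimate (run k ks s) i <= Nres s j / (ks - j)%:R.
Proof.
have [H [hH ->]] := nres_set s j.
have [hu hn hg hK] := inv H hks1 hks2 hpos.
split => //.
have kj : 0 < (ks - j)%:R :> R by rewrite ltr0n subn_gt0.
rewrite ler_pdivlMr // mulrC.
apply: (@le_trans _ _ ((ks - #|H|)%:R * (freq s i - estimate (run k ks s) i))).
  apply: ler_wpM2r => //; rewrite ler_nat; exact: leq_sub2l.
apply: le_trans (hK i) _; apply: ler_sum => b _.
rewrite lerBlDr lerDl; exact: est_ge0.
Qed.
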